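(* For every permutation $w$ of $\{1,\ldots,n\}$, $$\mathrm{wt}(w)=\prod_{(\alpha,\beta)}\frac{N(\alpha,\beta)}{D(\alpha,\beta)},$$ where the product runs over all ordered pairs of node labels $(\alpha,\beta)$ of the tree $T(w^{-1})$ such that $\alpha$ lies in the left subtree of the node $\beta$.
   Context: Work in $\mathbb{Q}(x_1,x_2,\ldots)$ with the field endomorphism $F$ given by $F(x_i)=x_{i+1}$. Define $[n]:=x_1+\cdots+x_n$, $[0]!:=1$, $[n]!:=[n]\cdot F([n-1]!)=\prod_{j=0}^{n-1}F^j[n-j]$. For a $k$-element set $S=\{i_1>\cdots>i_k\}$ of positive integers, $\mathrm{wt}(S):=\frac{\prod_{j=1}^k F^{i_j-1}[j]}{[k]!}$ ($\mathrm{wt}(\emptyset)=1$). For a permutation $w=(w_1,\ldots,w_n)$ in one-line notation, $\mathrm{wt}(w)$ is defined recursively: the empty permutation has weight $1$; otherwise let $k:=w_1-1$, $S(w):=\{i:w_i\le k\}$, $a$ the permutation of $\{1,\ldots,k\}$ listing the values $w_i\le k$ in order of increasing $i$, and $\hat b$ the permutation of $\{1,\ldots,n-k-1\}$ listing the values $w_i-k-1$ for $w_i>k+1$ in order of increasing $i$; then $\mathrm{wt}(w):=\mathrm{wt}(S(w))\,\mathrm{wt}(a)\,F^{k+1}(\mathrm{wt}(\hat b))$. For a word $v=v_1\cdots v_m$ with distinct letters, its increasing binary tree $T(v)$ is defined recursively: empty if $m=0$; otherwise, if $v_j$ is the smallest letter, $T(v)$ has root labelled $v_j$, left subtree $T(v_1\cdots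 v_{j-1})$ and right subtree $T(v_{j+1}\cdots v_m)$. Here $w^{-1}$ is the word $w^{-1}(1)w^{-1}(2)\cdots w^{-1}(n)$. For node labels $\alpha,\beta$ of $T(w^{-1})$ with $\alpha$ in the left subtree of $\beta$, let $\ell=\ell(\alpha,\beta)$ be the number of nodes in the left subtree of $\beta$ with label $\geq\alpha$, and $r=r(\alpha,\beta)$ the number of nodes in the right subtree of $\beta$ with label $<\alpha$. Define $D(\alpha,\beta):=x_{w(\beta)-1}+x_{w(\beta)-2}+\cdots+x_{w(\beta)-\ell}=F^{w(\beta)-\ell-1}[\ell]$ and $N(\alpha,\beta):=F^{r+1}(D(\alpha,\beta))=F^{w(\beta)+r-\ell}[\ell]$. *)

(* Defs.v *)
From HB Require Import structures.
From mathcomp Require Import all_boot all_order all_algebra all_fingroup.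
From mathcomp Require Import mpoly.

Set Implicit Arguments.
Unset Strict Implicit.
Unset Printing Implicit Defensive.

Import Order.TTheory GRing.Theory Num.Theory.
Local Open Scope ring_scope.

(* The ambient field.  The paper works in Q(x_1,x_2,...) with the field       *)
(* endomorphism F : x_i |-> x_{i+1}.  We work in an arbitrary field K with a  *)
(* family x : nat -> K that is algebraically independent over Q and a field   *)
(* endomorphism F of K with F (x i) = x (i+1).  Convention: x k stands for    *)
(* the paper's x_{k+1} (so x 0 = x_1).  The subfield Q(x 0, x 1, ...) of K,   *)
(* with F restricted to it, is then a copy of (Q(x_1,x_2,...), F).            *)

Definition alg_indep (K : fieldType) (x : nat -> K) : Prop :=
  forall (m : nat) (p : {mpoly rat[m]}),
    p != 0 -> (map_mpoly (@ratr K) p).@[fun i : 'I_m => x (nat_of_ord i)] != 0.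

Section Weights.
Variables (K : fieldType) (x : nat -> K) (F : {rmorphism K -> K}).

(* the paper's x_i, for i >= 1 *)
Definition xp (i : nat) : K := x i.-1.

Definition Fp (k : nat) (a : K) : K := iter k F a.

Definition brk (n : nat) : K := \sum_(1 <= i < n.+1) xp i.

Definition brk_fact (n : nat) : K := \prod_(j < n) Fp j (brk (n - j)).

(* wt(S) for S = {i_1 > ... > i_k} given as the decreasing list s *)
Definition wt_set (s : seq nat) : K :=
  (\prod_(j < size s) Fp ((nth 0%N s j).-1) (brk j.+1)) / brk_fact (size s).

(* wt of a permutation given in one-line notation as a list of values
   (values in {1..n}); recursion with fuel = size *)
Fixpoint wt_rec (fuel : nat) (w : seq nat) : K :=
  match fuel with
  | 0 => 1
  | fuel'.+1 =>
    match w with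
    | [::] => 1
    | w1 :: _ =>
      let k := w1.-1 in
      (* S(w) = {i : w_i <= k}, positions 1-based, listed decreasingly *)
      let S := rev [seq i.+1 | i <- iota 0 (size w) & (nth 0%N w i <= k)%N] in
      let a := [seq v <- w | (v <= k)%N] in
      let bh := [seq (v - k.+1)%N | v <- w & (k.+1 < v)%N] in
      wt_set S * wt_rec fuel' a * Fp k.+1 (wt_rec fuel' bh)
    end
  end.

Definition wt_word (w : seq nat) : K := wt_rec (size w) w.

End Weights.

Definition oneline (n : nat) (w : 'S_n) : seq nat :=
  [seq (w i).+1 | i <- enum 'I_n].

Definition oneline_inv (n : nat) (w : 'S_n) : seq nat := oneline w^-1.

Definition wt_perm (K : fieldType) (x : nat -> K) (F : {rmorphism K -> K})
  (n : nat) (w : 'S_n) : K := wt_word x F (oneline w).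

Inductive btree : Type :=
| Leaf : btree
| Node : nat -> btree -> btree -> btree.

Fixpoint labels (t : btree) : seq nat :=
  match t with
  | Leaf => [::]
  | Node b l r => labels l ++ b :: labels r
  end.

Fixpoint ibt_rec (fuel : nat) (v : seq nat) : btree :=
  match fuel with
  | 0 => Leaf
  | fuel'.+1 =>
    match v with
    | [::] => Leaf
    | v1 :: _ =>
      let m := foldr minn v1 v in
      let j := index m v in
      Node m (ibt_rec fuel' (take j v)) (ibt_rec fuel' (drop j.+1 v))
    end
  end.

Definition ibt (v : seq nat) : btree := ibt_rec (size v) v.

Section TreeProduct.
Variables (K : fieldType) (x : nat -> K) (F : {rmorphism K -> K}).
Variables (n : nat) (w : 'S_n).

Definition wval (beta : nat) : nat := nth 0%N (oneline w) beta.-1.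

Definition Dab (alpha beta : nat) (L : btree) : K :=
  let l := count (fun c => (alpha <= c)%N) (labels L) in
  \sum_(1 <= i < l.+1) xp x (wval beta - i)%N.

Definition Nab (alpha beta : nat) (L R : btree) : K :=
  let r := count (fun c => (c < alpha)%N) (labels R) in
  Fp F r.+1 (Dab alpha beta L).

Fixpoint tree_prod (t : btree) : K :=
  match t with
  | Leaf => 1
  | Node beta L R =>
      (\prod_(alpha <- labels L) (Nab alpha beta L R / Dab alpha beta L))
      * tree_prod L * tree_prod R
  end.

End TreeProduct.

(* Main.v *)
Require Import Defs.
From HB Require Import structures.
From mathcomp Require Import all_boot all_order all_algebra all_fingroup.
From mathcomp Require Import mpoly.
From mathcomp Require Import zify.
Set Implicit Arguments.
Unset Strict Implicit.
Unset Printing Implicit Defensive.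

Module Part1.


Lemma foldr_minn_mem (x0 : nat) s : foldr minn x0 s \in x0 :: s.
Proof.
elim: s => [|y s IH] /=; first by rewrite mem_head.
rewrite /minn; case: ifP => _; first by rewrite !inE eqxx orbT.
move: IH; rewrite !inE => /orP[->//|->]; by rewrite !orbT.
Qed.

Lemma ibt_rec_fuel2 f : forall g v, (size v <= f)%N -> (size v <= g)%N -> ibt_rec f v = ibt_rec g v.
Proof.
induction f as [|f IH] => g v.
  by case: v => //=; case: g.
case: v => [|v1 s]; first by case: g.
case: g => [|g] /=; first by [].
rewrite !ltnS => Hf Hg.
set mm := foldr minn v1 s.
have Hj : (index (minn v1 mm) (v1 :: s) < (size s).+1)%N.
  rewrite -[(size s).+1]/(size (v1::s)) index_mem.
  rewrite /mm; move: (foldr_minn_mem v1 (v1::s)) => /=; rewrite inE => /orP[/eqP ->|//]; exact: mem_head.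
move: Hj => /=; set J := (if _ then _ else _) => Hj.
congr Node; apply: IH; rewrite ?size_take ?size_drop /=; try case: ifP; lia.
Qed.

Lemma ibt_rec_fuel f v : (size v <= f)%N -> ibt_rec f v = ibt v.
Proof. by move=> H; apply: ibt_rec_fuel2. Qed.

Definition minl (v : seq nat) := if v is v1 :: _ then foldr minn v1 v else 0%N.

Lemma minl_mem v : v != [::] -> minl v \in v.
Proof.
case: v => [|v1 s] // _; rewrite /minl.
by move: (foldr_minn_mem v1 (v1::s)); rewrite inE => /orP[/eqP ->|//]; exact: mem_head.
Qed.

Lemma ibt_cons v : v != [::] ->
  ibt v = Node (minl v) (ibt (take (index (minl v) v) v)) (ibt (drop (index (minl v) v).+1 v)).
Proof.
case: v => [|v1 s] // _.
have Hj : (index (minl (v1::s)) (v1 :: s) < (size s).+1)%N.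
  by rewrite -[(size s).+1]/(size (v1::s)) index_mem minl_mem.
have -> : ibt (v1 :: s) = Node (minl (v1::s)) (ibt_rec (size s) (take (index (minl (v1::s)) (v1::s)) (v1::s)))
   (ibt_rec (size s) (drop (index (minl (v1::s)) (v1::s)).+1 (v1::s))) by [].
move: Hj; set j := index _ _ => Hj.
rewrite !ibt_rec_fuel // ?size_take ?size_drop; rewrite -?[size (v1::s)]/((size s).+1); try case: ifP; lia.
Qed.

Lemma ibt_nil : ibt [::] = Leaf. Proof. by []. Qed.

Lemma labels_ibt v : labels (ibt v) = v.
Proof.
move: {2}(size v) (leqnn (size v)) => n; elim: n v => [|n IH] v.
  by case: v.
case: v => [|v1 s] Hs; first by [].
have Hne : v1 :: s != [::] by [].
move: Hs Hne; set v := v1 :: s => Hs Hne.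
have Hj : (index (minl v) v < size v)%N by rewrite index_mem minl_mem.
rewrite ibt_cons //; move: Hj; set j := index _ _ => Hj.
have H1 : (size (take j v) <= n)%N by rewrite size_take; case: ifP; lia.
have H2 : (size (drop j.+1 v) <= n)%N by rewrite size_drop; lia.
rewrite [labels _]/= !IH //.
rewrite -[RHS](cat_take_drop j v); congr cat.
by rewrite (drop_nth 0 Hj) nth_index // minl_mem.
Qed.

Fixpoint tmap (g : nat -> nat) (t : btree) : btree :=
  match t with
  | Leaf => Leaf
  | Node b L R => Node (g b) (tmap g L) (tmap g R)
  end.

Lemma labels_tmap g t : labels (tmap g t) = map g (labels t).
Proof. by elim: t => //= b L IHL R IHR; rewrite IHL IHR map_cat. Qed.

Lemma mono_inj (g : nat -> nat) (s : seq nat) :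
  {in s &, {mono g : a b / (a < b)%N}} -> {in s &, injective g}.
Proof.
move=> Hm a b Ha Hb Hab.
case: (ltngtP a b) => // H; move: (H).
  by rewrite -(Hm a b) // Hab ltnn.
by rewrite -(Hm b a) // Hab ltnn.
Qed.

Lemma index_map_in (g : nat -> nat) (s : seq nat) y :
  {in s &, injective g} -> y \in s -> index (g y) (map g s) = index y s.
Proof.
elim: s => [|z s IH] //= Hi Hy.
have Hi' : {in s &, injective g} by move=> a b Ha Hb; apply: Hi; rewrite inE ?Ha ?Hb orbT.
case: (eqVneq z y) => [->|Hzy]; first by rewrite eqxx.
have Hy' : y \in s by move: Hy; rewrite inE eq_sym (negbTE Hzy).
have -> : (g z == g y) = false.
  apply/negbTE/eqP => /Hi; rewrite mem_head inE Hy' orbT => /(_ isT isT) E.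
  by rewrite E eqxx in Hzy.
by rewrite IH.
Qed.


Lemma foldr_minn_map (g : nat -> nat) x0 s :
  {in x0 :: s &, {mono g : a b / (a < b)%N}} ->
  foldr minn (g x0) (map g s) = g (foldr minn x0 s).
Proof.
elim: s => [|y s IH] //= Hm.
have Hs : {in x0 :: s &, {mono g : a b / (a < b)%N}}.
  move=> a b Ha Hb; apply: Hm.
    by move: Ha; rewrite !inE => /orP[->|->]; rewrite ?orbT.
  by move: Hb; rewrite !inE => /orP[->|->]; rewrite ?orbT.
rewrite IH //.
have Hy : y \in x0 :: y :: s by rewrite !inE eqxx orbT.
have Hf : foldr minn x0 s \in x0 :: y :: s.
  by move: (foldr_minn_mem x0 s); rewrite !inE => /orP[->|->]; rewrite ?orbT.
by rewrite /minn Hm //; case: ifP.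
Qed.

Lemma minl_map (g : nat -> nat) v :
  v != [::] -> {in v &, {mono g : a b / (a < b)%N}} -> minl (map g v) = g (minl v).
Proof.
case: v => [|v1 s] // _ Hm.
rewrite /minl.
change (foldr minn (g v1) (map g (v1 :: s)) = g (foldr minn v1 (v1 :: s))).
rewrite foldr_minn_map //.
move=> a b Ha Hb; apply: Hm.
  by move: Ha; rewrite inE => /orP[/eqP->|//]; exact: mem_head.
by move: Hb; rewrite inE => /orP[/eqP->|//]; exact: mem_head.
Qed.

Lemma ibt_map (g : nat -> nat) v :
  {in v &, {mono g : a b / (a < b)%N}} -> ibt (map g v) = tmap g (ibt v).
Proof.
move: {2}(size v) (leqnn (size v)) => n; elim: n v => [|n IH] v.
  by case: v.
case: v => [|v1 s] Hs Hm; first by [].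
have Hne : v1 :: s != [::] by [].
move: Hs Hne Hm; set v := v1 :: s => Hs Hne Hm.
have Hne' : map g v != [::] by [].
have Hj : (index (minl v) v < size v)%N by rewrite index_mem minl_mem.
have Hinj := mono_inj Hm.
rewrite (ibt_cons Hne) (ibt_cons Hne') minl_map // index_map_in ?minl_mem //.
move: Hj; set j := index _ _ => Hj.
have H1 : (size (take j v) <= n)%N by rewrite size_take; case: ifP; lia.
have H2 : (size (drop j.+1 v) <= n)%N by rewrite size_drop; lia.
rewrite -map_take -map_drop [tmap _ _]/=.
rewrite IH //; last by move=> a b Ha Hb; apply: Hm; [exact: mem_take Ha|exact: mem_take Hb].
rewrite IH //; last by move=> a b Ha Hb; apply: Hm; [exact: mem_drop Ha|exact: mem_drop Hb].
Qed.

End Part1.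
Import Part1.

Module Part2.
Import GRing.Theory.
Local Open Scope ring_scope.

Section Field.
Variables (K : fieldType) (x : nat -> K) (F : {rmorphism K -> K}).
Hypothesis hF : forall i : nat, F (x i) = x i.+1.

Definition Dg (f : nat -> nat) (a b : nat) (L : btree) : K :=
  \sum_(1 <= i < (count (fun c => (a <= c)%N) (labels L)).+1) xp x (f b - i)%N.

Definition Ng (f : nat -> nat) (a b : nat) (L R : btree) : K :=
  Fp F (count (fun c => (c < a)%N) (labels R)).+1 (Dg f a b L).

Fixpoint tp (f : nat -> nat) (t : btree) : K :=
  match t with
  | Leaf => 1
  | Node b L R =>
      (\prod_(a <- labels L) (Ng f a b L R / Dg f a b L)) * tp f L * tp f R
  end.

Lemma tree_prod_tp n (w : 'S_n) t : tree_prod x F w t = tp (wval w) t.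
Proof. by elim: t => //= b L IHL R IHR; rewrite IHL IHR. Qed.

Lemma tp_congr f f' t : {in labels t, f =1 f'} -> tp f t = tp f' t.
Proof.
elim: t => //= b L IHL R IHR H.
rewrite IHL ?IHR; last 2 first.
- by move=> c Hc; apply: H; rewrite mem_cat inE Hc !orbT.
- by move=> c Hc; apply: H; rewrite mem_cat Hc.
by rewrite /Ng /Dg H // mem_cat inE eqxx orbT.
Qed.

Lemma tp_tmap (g : nat -> nat) f f' t :
  {in labels t &, {mono g : a b / (a < b)%N}} ->
  {in labels t, forall b, f' (g b) = f b} ->
  tp f' (tmap g t) = tp f t.
Proof.
elim: t => //= b L IHL R IHR Hm Hf.
have HL : {subset labels L <= labels L ++ b :: labels R}.
  by move=> c Hc; rewrite mem_cat Hc.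
have HR : {subset labels R <= labels L ++ b :: labels R}.
  by move=> c Hc; rewrite mem_cat inE Hc !orbT.
have Hb : b \in labels L ++ b :: labels R by rewrite mem_cat inE eqxx orbT.
have HmL : {in labels L &, {mono g : a b / (a < b)%N}}.
  by move=> c d Hc Hd; apply: Hm; apply: HL.
have HmR : {in labels R &, {mono g : a b / (a < b)%N}}.
  by move=> c d Hc Hd; apply: Hm; apply: HR.
have HfL : {in labels L, forall b, f' (g b) = f b}.
  by move=> c Hc; apply: Hf; exact: HL.
have HfR : {in labels R, forall b, f' (g b) = f b}.
  by move=> c Hc; apply: Hf; exact: HR.
rewrite IHL // IHR //.
congr (_ * _ * _).
rewrite !labels_tmap big_map; apply: eq_big_seq => a Ha.
rewrite /Ng /Dg !labels_tmap !count_map Hf //.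
have -> : count (preim g (fun c => (g a <= c)%N)) (labels L) =
          count (fun c => (a <= c)%N) (labels L).
  apply: eq_in_count => c Hc /=.
  by rewrite (leqNgt (g a)) (leqNgt a) Hm //; apply: HL.
have -> : count (preim g (fun c => (c < g a)%N)) (labels R) =
          count (fun c => (c < a)%N) (labels R).
  apply: eq_in_count => c Hc /=.
  by rewrite Hm //; [apply: HR|apply: HL].
by [].
Qed.


Lemma Fp_add c : {morph Fp F c : a b / a + b}.
Proof. by elim: c => // c IH a b; rewrite /Fp /= in IH *; rewrite IH rmorphD. Qed.
Lemma Fp_mul c : {morph Fp F c : a b / a * b}.
Proof. by elim: c => // c IH a b; rewrite /Fp /= in IH *; rewrite IH rmorphM. Qed.
Lemma Fp_0 c : Fp F c 0 = 0.
Proof. by elim: c => // c IH; rewrite /Fp /= in IH *; rewrite IH rmorph0. Qed.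
Lemma Fp_1 c : Fp F c 1 = 1.
Proof. by elim: c => // c IH; rewrite /Fp /= in IH *; rewrite IH rmorph1. Qed.
Lemma Fp_inv c : {morph Fp F c : a / a^-1}.
Proof. by elim: c => // c IH a; rewrite /Fp /= in IH *; rewrite IH fmorphV. Qed.
Lemma Fp_div c a b : Fp F c (a / b) = Fp F c a / Fp F c b.
Proof. by rewrite Fp_mul Fp_inv. Qed.
Lemma Fp_sum c I (r : seq I) (P : pred I) (E : I -> K) :
  Fp F c (\sum_(i <- r | P i) E i) = \sum_(i <- r | P i) Fp F c (E i).
Proof. exact: (big_morph _ (Fp_add c) (Fp_0 c)). Qed.
Lemma Fp_prod c I (r : seq I) (P : pred I) (E : I -> K) :
  Fp F c (\prod_(i <- r | P i) E i) = \prod_(i <- r | P i) Fp F c (E i).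
Proof. exact: (big_morph _ (Fp_mul c) (Fp_1 c)). Qed.
Lemma Fp_comp a b z : Fp F a (Fp F b z) = Fp F (a + b) z.
Proof. by rewrite /Fp iterD. Qed.
Lemma Fp_x c m : Fp F c (x m) = x (m + c).
Proof. elim: c => [|c IH]; first by rewrite /Fp /= addn0.
by rewrite /Fp /= in IH *; rewrite IH hF addnS. Qed.
Lemma Fp_xp c m : (0 < m)%N -> Fp F c (xp x m) = xp x (m + c).
Proof. by move=> Hm; rewrite /xp Fp_x; congr x; lia. Qed.

Fixpoint good (f : nat -> nat) (t : btree) : Prop :=
  match t with
  | Leaf => True
  | Node b L R => (size (labels L) < f b)%N /\ good f L /\ good f R
  end.

Lemma tp_shift f c t : good f t -> tp (fun b => f b + c)%N t = Fp F c (tp f t).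
Proof.
elim: t => /= [|b L IHL R IHR [Hs [HL HR]]]; first by rewrite Fp_1.
rewrite !Fp_mul IHL // IHR //; congr (_ * _ * _).
rewrite Fp_prod; apply: eq_bigr => a _.
have HD : Dg (fun b => f b + c)%N a b L = Fp F c (Dg f a b L).
  rewrite /Dg Fp_sum; apply: eq_big_nat => i /andP[Hi1 Hi2].
  have Hc := count_size (fun c => (a <= c)%N) (labels L).
  rewrite Fp_xp; last lia.
  by congr xp; lia.
by rewrite Fp_div /Ng HD !Fp_comp addnC.
Qed.

Lemma index_take_in (v : seq nat) k b : b \in take k v -> index b v = index b (take k v).
Proof. by move=> Hb; rewrite -{1}(cat_take_drop k v) index_cat Hb. Qed.

Lemma index_drop_in (v : seq nat) k b : uniq v -> b \in drop k v ->
  index b v = (size (take k v) + index b (drop k v))%N.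
Proof.
move=> Hu Hb; rewrite -{1}(cat_take_drop k v) index_cat.
case: ifP => // Hb'.
move: Hu; rewrite -(cat_take_drop k v) cat_uniq => /and3P[_ /hasP H _].
by exfalso; apply: H; exists b.
Qed.

Lemma good_mono f f' t : good f t -> {in labels t, forall b, f b <= f' b}%N -> good f' t.
Proof.
elim: t => //= b L IHL R IHR [Hs [HL HR]] H; split; last split.
- by apply: leq_trans Hs _; apply: H; rewrite mem_cat inE eqxx orbT.
- by apply: IHL => // c Hc; apply: H; rewrite mem_cat Hc.
- by apply: IHR => // c Hc; apply: H; rewrite mem_cat inE Hc !orbT.
Qed.

Lemma good_ibt v : uniq v -> good (fun b => (index b v).+1) (ibt v).
Proof.
move: {2}(size v) (leqnn (size v)) => n; elim: n v => [|n IH] v.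
  by case: v.
case: v => [|v1 s] Hs Hu; first by [].
have Hne : v1 :: s != [::] by [].
move: Hs Hne Hu; set v := v1 :: s => Hs Hne Hu.
have Hj : (index (minl v) v < size v)%N by rewrite index_mem minl_mem.
rewrite (ibt_cons Hne); move: Hj; set j := index _ _ => Hj.
have H1 : (size (take j v) <= n)%N by rewrite size_take; case: ifP; lia.
have H2 : (size (drop j.+1 v) <= n)%N by rewrite size_drop; lia.
split; last split.
- by rewrite labels_ibt size_take Hj.
- apply: good_mono (IH _ H1 (take_uniq _ Hu)) _ => c; rewrite labels_ibt => Hc.
  by rewrite (index_take_in Hc).
- apply: good_mono (IH _ H2 (drop_uniq _ Hu)) _ => c; rewrite labels_ibt => Hc.
  by rewrite (index_drop_in Hu Hc) ltnS leq_addl.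
Qed.

End Field.

End Part2.
Import Part2.

Module Part3.

Lemma index_filter (P : pred nat) (s : seq nat) y : y \in s -> P y ->
  index y (filter P s) = count P (take (index y s) s).
Proof.
elim: s => [|z s IH] //= Hy Py.
case: (eqVneq z y) => [->|Hzy]; first by rewrite Py /= eqxx.
have Hy' : y \in s by move: Hy; rewrite inE eq_sym (negbTE Hzy).
case: ifP => Pz /=; rewrite ?(negbTE Hzy) IH // Pz //=.
Qed.

Lemma count_take_succ (P : pred nat) (s : seq nat) y : y \in s -> P y ->
  count P (take (index y s).+1 s) = (count P (take (index y s) s)).+1.
Proof.
move=> Hy Py; rewrite (take_nth 0); last by rewrite index_mem.
by rewrite -cats1 count_cat nth_index //= Py addn1.
Qed.

Lemma count_take_le (P : pred nat) (s : seq nat) p q : (p <= q)%N ->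
  (count P (take p s) <= count P (take q s))%N.
Proof.
move=> Hpq; rewrite -(subnKC Hpq) takeD count_cat; exact: leq_addr.
Qed.

Lemma count_take_lt (P : pred nat) (s : seq nat) p q : (p < q)%N -> (q <= size s)%N ->
  P (nth 0%N s q.-1) -> (count P (take p s) < count P (take q s))%N.
Proof.
move=> Hpq Hq Pq.
have E : q = (q.-1).+1 by lia.
rewrite E (take_nth 0); last lia.
rewrite -cats1 count_cat /= Pq addn1 ltnS; apply: count_take_le; lia.
Qed.

Lemma mono_count (P : pred nat) (W : seq nat) (s : seq nat) :
  {in s, forall p, (0 < p)%N && (p <= size W)%N && P (nth 0%N W p.-1)} ->
  {in s &, {mono (fun p => count P (take p W)) : a b / (a < b)%N}}.
Proof.
move=> H p q Hp Hq /=.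
case: (ltnP p q) => Hpq.
  case/andP: (H q Hq) => /andP[_ Hs] HP; exact: count_take_lt.
by apply/negbTE; rewrite -leqNgt; apply: count_take_le.
Qed.

Lemma foldr_minn_le (x0 : nat) s : (foldr minn x0 s <= x0)%N /\ {in s, forall y, foldr minn x0 s <= y}%N.
Proof.
elim: s => [|z s [IH1 IH2]] /=; first by split.
split; first by apply: leq_trans (geq_minr _ _) IH1.
move=> y; rewrite inE => /orP[/eqP->|Hy]; first exact: geq_minl.
by apply: leq_trans (geq_minr _ _) (IH2 _ Hy).
Qed.

Lemma minl_le v y : y \in v -> (minl v <= y)%N.
Proof.
case: v => [|v1 s] //= Hy.
have [H1 H2] := foldr_minn_le v1 s.
by move: Hy; rewrite inE => /orP[/eqP->|Hy]; [apply: geq_minl|apply: leq_trans (geq_minr _ _) (H2 _ Hy)].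
Qed.

Definition winv (W : seq nat) := [seq (index j W).+1 | j <- iota 1 (size W)].

Section WFacts.
Variables (n : nat) (W : seq nat).
Hypothesis HW : perm_eq W (iota 1 n).

Lemma memW q : (q \in W) = (0 < q <= n)%N.
Proof. by rewrite (perm_mem HW) mem_iota; lia. Qed.

Lemma uniqW : uniq W.
Proof. by rewrite (perm_uniq HW) iota_uniq. Qed.

Lemma sizeW : size W = n.
Proof. by rewrite (perm_size HW) size_iota. Qed.

Lemma winv_size : size (winv W) = n.
Proof. by rewrite /winv size_map size_iota sizeW. Qed.

Lemma winv_nth j : (j < n)%N -> nth 0%N (winv W) j = (index j.+1 W).+1.
Proof. by move=> Hj; rewrite /winv (nth_map 0%N) ?size_iota ?sizeW // nth_iota ?sizeW. Qed.

Lemma winv_mem p : (p \in winv W) = (0 < p <= n)%N.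
Proof.
apply/idP/idP.
  case/mapP => j; rewrite sizeW mem_iota => Hj ->.
  have : j \in W by rewrite memW; lia.
  rewrite -index_mem sizeW; lia.
move=> Hp; apply/mapP; exists (nth 0%N W p.-1).
  by rewrite sizeW mem_iota -memW mem_nth // sizeW; lia.
by rewrite index_uniq ?uniqW ?sizeW; lia.
Qed.

Lemma winv_uniq : uniq (winv W).
Proof.
rewrite /winv map_inj_in_uniq ?iota_uniq // => a b Ha Hb [] E.
move: Ha Hb; rewrite sizeW !mem_iota => Ha Hb.
have Ha' : a \in W by rewrite memW; lia.
have Hb' : b \in W by rewrite memW; lia.
by rewrite -(nth_index 0%N Ha') E nth_index.
Qed.

Lemma winv_perm : perm_eq (winv W) (iota 1 n).
Proof.
apply: uniq_perm; rewrite ?winv_uniq ?iota_uniq // => p.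
by rewrite winv_mem mem_iota; lia.
Qed.

Lemma winv_index p : (0 < p <= n)%N -> index p (winv W) = (nth 0%N W p.-1).-1.
Proof.
move=> Hp.
have Hm : nth 0%N W p.-1 \in W by rewrite mem_nth // sizeW; lia.
have Hm' := Hm; rewrite memW in Hm'.
have Hj : ((nth 0%N W p.-1).-1 < n)%N by lia.
rewrite -[in index p _](_ : nth 0%N (winv W) (nth 0%N W p.-1).-1 = p).
  by rewrite index_uniq ?winv_uniq ?winv_size.
rewrite winv_nth // prednK; last lia.
by rewrite index_uniq ?uniqW ?sizeW; lia.
Qed.

End WFacts.

Lemma count_geq_sorted (s : seq nat) j : sorted (fun a b => b < a)%N s -> (j < size s)%N ->
  count (fun c => nth 0%N s j <= c)%N s = j.+1.
Proof.
elim: s j => [|y s IH] j //= Hs Hj.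
have Htr : transitive (fun a b : nat => (b < a)%N) by move=> a b c H1 H2; apply: ltn_trans H2 H1.
have Hall := order_path_min Htr Hs.
have Hs' := path_sorted Hs.
case: j Hj => [|j] Hj /=.
  rewrite leqnn (eq_in_count (a2 := pred0)); first by rewrite count_pred0.
  by move=> c Hc /=; move/allP: Hall => /(_ c Hc) /= Hcy; rewrite leqNgt Hcy.
rewrite IH //.
have : nth 0%N s j \in s by rewrite mem_nth.
by move/allP: Hall => H /H /= /ltnW ->.
Qed.

End Part3.
Import Part3.

Module Part4.
Import GRing.Theory.
Local Open Scope ring_scope.

Lemma count_lt_iota n a : (0 < a <= n)%N -> count (fun c => c < a)%N (iota 1 n) = a.-1.
Proof.
move=> Ha; rewrite -size_filter.
have -> : [seq c <- iota 1 n | (c < a)%N] = [seq c <- iota 1 n | (c < 1 + a.-1)%N].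
  by apply: eq_filter => c; rewrite add1n prednK //; lia.
by rewrite filter_iota_ltn ?size_iota //; lia.
Qed.

Lemma root_count n k (L R : seq nat) a :
  perm_eq (L ++ 1%N :: R) (iota 1 n) -> size L = k -> a \in L ->
  ((count (fun c => c < a) R).+1 + (k - count (fun c => a <= c) L) = a.-1)%N.
Proof.
move=> HP HL Ha.
have Hu : uniq (L ++ 1%N :: R) by rewrite (perm_uniq HP) iota_uniq.
have Ham : a \in iota 1 n by rewrite -(perm_mem HP) mem_cat Ha.
rewrite mem_iota in Ham.
have Ha1 : a != 1%N.
  apply/eqP => E; move: Hu; rewrite cat_uniq => /and3P[_ H _].
  by move: H; apply/negP/negPn/hasP; exists 1%N; rewrite ?mem_head // -E.
have Hc := count_lt_iota (a := a) (n := n); rewrite -((seq.permP HP) (fun c => c < a)%N) in Hc.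
rewrite count_cat /= in Hc.
have Hc2 := count_predC (fun c => c < a)%N L.
have -> : count (fun c => a <= c)%N L = count (predC (fun c => c < a)%N) L.
  by apply: eq_count => c /=; rewrite leqNgt.
have : (1 < a)%N by rewrite ltn_neqAle eq_sym Ha1; lia.
move=> H1; rewrite H1 in Hc.
have := Hc ltac:(lia); lia.
Qed.

Section Root.
Variables (K : fieldType) (x : nat -> K) (F : {rmorphism K -> K}).
Hypothesis hF : forall i : nat, F (x i) = x i.+1.

Lemma D_eq k l : (l <= k)%N ->
  \sum_(1 <= i < l.+1) xp x (k.+1 - i)%N = Fp F (k - l) (brk x l).
Proof.
move=> Hl; rewrite /brk Fp_sum big_nat_rev /=; apply: eq_big_nat => i /andP[H1 H2].
rewrite Fp_xp //; congr xp; lia.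
Qed.

Lemma root_eq n k (L R S : seq nat) :
  perm_eq (L ++ 1%N :: R) (iota 1 n) -> size L = k -> perm_eq L S ->
  sorted (fun a b => b < a)%N S ->
  wt_set x F S =
  \prod_(a <- L) (Fp F (count (fun c => c < a)%N R).+1
                    (\sum_(1 <= i < (count (fun c => a <= c)%N L).+1) xp x (k.+1 - i)%N)
                  / \sum_(1 <= i < (count (fun c => a <= c)%N L).+1) xp x (k.+1 - i)%N).
Proof.
move=> HP HL HLS Hsort.
have HS : size S = k by rewrite -(perm_size HLS).
rewrite (perm_big _ HLS) (big_nth 0%N) big_mkord /wt_set HS.
rewrite [RHS](eq_bigr (fun j : 'I_k => Fp F (nth 0%N S j).-1 (brk x j.+1) / Fp F (k - j.+1) (brk x j.+1))); last first.
  move=> j _.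
  have Hj : (j < size S)%N by rewrite HS ltn_ord.
  have Ha : nth 0%N S j \in L by rewrite (perm_mem HLS) mem_nth.
  rewrite ((seq.permP HLS) (fun c => nth 0%N S j <= c)%N) count_geq_sorted //.
  rewrite D_eq; last exact: ltn_ord.
  rewrite Fp_comp.
  have := root_count HP HL Ha.
  rewrite ((seq.permP HLS) (fun c => nth 0%N S j <= c)%N) count_geq_sorted // => ->.
  by [].
rewrite big_split /= prodfV; congr (_ * _^-1).
rewrite /brk_fact (reindex_inj rev_ord_inj); apply: eq_bigr => j _ /=.
congr (Fp _ _ (brk _ _)); rewrite -?HS; have := ltn_ord j; lia.
Qed.

End Root.

End Part4.
Import Part4.

Module Part5.
Import GRing.Theory.
Local Open Scope ring_scope.


Section ListFacts.
Variables (n k : nat) (W' : seq nat).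
Hypothesis HW : perm_eq (k.+1 :: W') (iota 1 n).
Local Notation W := (k.+1 :: W').
Local Notation V := (winv W).

Lemma kn : (k < n)%N.
Proof. by have := mem_head k.+1 W'; rewrite (memW HW); lia. Qed.

Lemma V_nthk : nth 0%N V k = 1%N.
Proof. by rewrite (winv_nth HW kn) /= eqxx. Qed.

Lemma V_index1 : index 1%N V = k.
Proof. by rewrite -V_nthk index_uniq ?(winv_uniq HW) ?(winv_size HW) ?kn. Qed.

Lemma V_minl : minl V = 1%N.
Proof.
have H1 : 1%N \in V by rewrite (winv_mem HW); have := kn; lia.
have Hne : V != [::] by apply/eqP => E; rewrite E in H1.
have := minl_le H1; have := minl_mem Hne; rewrite (winv_mem HW); lia.
Qed.

Lemma V_split : V = take k V ++ 1%N :: drop k.+1 V.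
Proof.
by rewrite -V_nthk -drop_nth ?cat_take_drop // (winv_size HW) kn.
Qed.

Lemma V_take : take k V = [seq (index j W).+1 | j <- iota 1 k].
Proof.
rewrite /winv -map_take take_iota (sizeW HW); congr map; congr iota.
by have := kn; lia.
Qed.

Lemma V_drop : drop k.+1 V = [seq (index (k.+1 + j) W).+1 | j <- iota 1 (n - k.+1)].
Proof.
rewrite /winv -map_drop drop_iota (sizeW HW).
have -> : (1 + k.+1 = k.+1 + 1)%N by lia.
by rewrite iotaDl -map_comp.
Qed.

Definition afilt := [seq v <- W | (v <= k)%N].
Definition bfilt := [seq (v - k.+1)%N | v <- W & (k.+1 < v)%N].
Definition gcnt p := count (fun v => v <= k)%N (take p W).
Definition hcnt p := count (fun v => k.+1 < v)%N (take p W).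

Lemma afilt_perm : perm_eq afilt (iota 1 k).
Proof.
apply: perm_trans (perm_filter _ HW) _.
have -> : [seq v <- iota 1 n | (v <= k)%N] = [seq v <- iota 1 n | (v < 1 + k)%N].
  by apply: eq_filter => v; rewrite add1n ltnS.
by rewrite filter_iota_ltn // ltnW // kn.
Qed.

Lemma bfilt_perm : perm_eq bfilt (iota 1 (n - k.+1)).
Proof.
apply: perm_trans (perm_map _ (perm_filter _ HW)) _.
have Hn := kn.
have -> : iota 1 n = iota 1 k.+1 ++ iota k.+2 (n - k.+1).
  by rewrite -[k.+2]/(1 + k.+1)%N -iotaD; congr iota; lia.
rewrite filter_cat.
have -> : [seq v <- iota 1 k.+1 | (k.+1 < v)%N] = [::].
  rewrite (eq_in_filter (a2 := pred0)) ?filter_pred0 // => v.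
  by rewrite mem_iota /= => Hv; apply/negbTE; lia.
have -> : [seq v <- iota k.+2 (n - k.+1) | (k.+1 < v)%N] = iota k.+2 (n - k.+1).
  rewrite (eq_in_filter (a2 := predT)) ?filter_predT // => v.
  by rewrite mem_iota /= => Hv; lia.
have -> : k.+2 = (k.+1 + 1)%N by lia.
rewrite /= iotaDl -map_comp map_id_in // => v _ /=; lia.
Qed.

Lemma afilt_size : size afilt = k.
Proof. by rewrite (perm_size afilt_perm) size_iota. Qed.

Lemma bfilt_size : size bfilt = (n - k.+1)%N.
Proof. by rewrite (perm_size bfilt_perm) size_iota. Qed.

Lemma winv_afilt : winv afilt = map gcnt (take k V).
Proof.
rewrite V_take /winv afilt_size -map_comp; apply/eq_in_map => j; rewrite mem_iota => Hj.
change ((index j afilt).+1 = gcnt (index j W).+1).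
have HjW : j \in W by rewrite (memW HW); have := kn; lia.
have Pj : (j <= k)%N by lia.
by rewrite /gcnt (count_take_succ (P := fun v => v <= k)%N) // /afilt (index_filter (P := fun v => v <= k)%N).
Qed.

Lemma winv_bfilt : winv bfilt = map hcnt (drop k.+1 V).
Proof.
rewrite V_drop /winv bfilt_size -map_comp; apply/eq_in_map => j; rewrite mem_iota => Hj /=.
have HjW : (k.+1 + j) \in W by rewrite (memW HW); lia.
have Pj : (k.+1 < k.+1 + j)%N by lia.
have E := @count_take_succ (fun v => k.+1 < v)%N _ _ HjW Pj.
apply: etrans _ (esym E); congr S.
rewrite /bfilt -index_filter //.
rewrite -[j in index j _](addKn k.+1 j).
rewrite (@index_map_in (fun v => v - k.+1)%N _ (k.+1 + j)) ?mem_filter ?Pj //.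
by move=> u v; rewrite !mem_filter => /andP[Hu _] /andP[Hv _] /= Euv; lia.
Qed.

Lemma gcnt_mono : {in take k V &, {mono gcnt : a b / (a < b)%N}}.
Proof.
apply: mono_count => p; rewrite V_take => /mapP[j]; rewrite mem_iota => Hj ->.
have HjW : j \in W by rewrite (memW HW); have := kn; lia.
have Hi : (index j W < size W)%N by rewrite index_mem.
apply/andP; split; first by apply/andP; split.
change (nth 0%N W (index j W) <= k)%N; rewrite nth_index //; lia.
Qed.

Lemma hcnt_mono : {in drop k.+1 V &, {mono hcnt : a b / (a < b)%N}}.
Proof.
apply: mono_count => p; rewrite V_drop => /mapP[j]; rewrite mem_iota => Hj ->.
have HjW : (k.+1 + j) \in W by rewrite (memW HW); lia.
have Hi : (index (k.+1 + j) W < size W)%N by rewrite index_mem.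
apply/andP; split; first by apply/andP; split.
change (k.+1 < nth 0%N W (index (k.+1 + j) W))%N; rewrite nth_index //; lia.
Qed.

Definition Sset := rev [seq i.+1 | i <- iota 0 (size W) & (nth 0%N W i <= k)%N].

Lemma S_sorted : sorted (fun a b => b < a)%N Sset.
Proof.
rewrite /Sset rev_sorted sorted_map.
apply: (sorted_filter (leT := fun a b => a < b)%N); first exact: ltn_trans.
exact: iota_ltn_sorted.
Qed.

Lemma S_perm : perm_eq (take k V) Sset.
Proof.
apply: uniq_perm.
- exact: take_uniq (winv_uniq HW).
- rewrite /Sset rev_uniq map_inj_uniq; last by move=> a b [].
  exact: filter_uniq (iota_uniq _ _).
move=> p; rewrite /Sset mem_rev.
case Hp : (0 < p <= n)%N.
  have HpV : p \in V by rewrite (winv_mem HW).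
  rewrite in_take // (winv_index HW Hp).
  have Hm : nth 0%N W p.-1 \in W by rewrite mem_nth // (sizeW HW); lia.
  rewrite (memW HW) in Hm.
  apply/idP/idP => H.
    apply/mapP; exists p.-1; last by lia.
    by rewrite mem_filter mem_iota (sizeW HW) /=; apply/andP; split; lia.
  case/mapP: H => i; rewrite mem_filter mem_iota => /andP[Hi1 Hi2] E.
  by move: Hm; rewrite E /= => Hm; lia.
apply/idP/idP => H.
  have : p \in V by apply: mem_take H.
  by rewrite (winv_mem HW) Hp.
case/mapP: H => i; rewrite mem_filter mem_iota (sizeW HW) => /andP[_ Hi] E.
by move: Hp; rewrite E; lia.
Qed.

End ListFacts.

Section Main.
Variables (K : fieldType) (x : nat -> K) (F : {rmorphism K -> K}).
Hypothesis hF : forall i : nat, F (x i) = x i.+1.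

Lemma wt_rec_step f w1 s :
  wt_rec x F f.+1 (w1 :: s) =
  wt_set x F (rev [seq i.+1 | i <- iota 0 (size (w1 :: s)) & (nth 0 (w1 :: s) i <= w1.-1)%N])
  * wt_rec x F f [seq v <- w1 :: s | (v <= w1.-1)%N]
  * Fp F w1.-1.+1 (wt_rec x F f [seq (v - w1.-1.+1)%N | v <- w1 :: s & (w1.-1.+1 < v)%N]).
Proof. by []. Qed.

Lemma wt_rec_fuel f1 : forall f2 u, all (fun v => 0 < v)%N u -> (size u <= f1)%N -> (size u <= f2)%N ->
  wt_rec x F f1 u = wt_rec x F f2 u.
Proof.
induction f1 as [|f1 IH] => f2 u.
  by case: u => //= _ _; case: f2.
case: u => [|w1 s]; first by case: f2.
case: f2 => [|f2] //.
move=> Hpos Hs1 Hs2; rewrite !wt_rec_step; move: Hs1 Hs2; rewrite [size _]/= !ltnS => Hs1 Hs2.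
have Hw1 : (0 < w1)%N by move: Hpos => /andP[].
have Hsz : forall P : pred nat, ~~ P w1 -> (size [seq v <- w1 :: s | P v] <= size s)%N.
  by move=> P HP; rewrite /= (negbTE HP) size_filter count_size.
congr (_ * _ * Fp _ _ _); apply: IH.
- by rewrite all_filter; apply/allP => v Hv; apply/implyP => _; move/allP: Hpos => /(_ v Hv).
- apply: leq_trans (Hsz _ _) _; [rewrite /= -ltnNge; lia | lia].
- apply: leq_trans (Hsz _ _) _; [rewrite /= -ltnNge; lia | lia].
- by apply/allP => v /mapP[y]; rewrite mem_filter => /andP[H _] ->; lia.
- rewrite size_map; apply: leq_trans (Hsz _ _) _; [rewrite /= -ltnNge; lia | lia].
- rewrite size_map; apply: leq_trans (Hsz _ _) _; [rewrite /= -ltnNge; lia | lia].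
Qed.

Lemma wt_rec_word f u : all (fun v => 0 < v)%N u -> (size u <= f)%N -> wt_rec x F f u = wt_word x F u.
Proof. by move=> H1 H2; rewrite /wt_word (wt_rec_fuel (f2 := size u) H1 H2). Qed.

Definition tpv (v : seq nat) : K := tp x F (fun b => (index b v).+1) (ibt v).

Lemma tpv_map (g : nat -> nat) v : uniq v -> {in v &, {mono g : a b / (a < b)%N}} ->
  tpv (map g v) = tpv v.
Proof.
move=> Hu Hm; rewrite /tpv ibt_map // (@tp_tmap _ x F g (fun b => (index b v).+1) _ (ibt v)) // ?labels_ibt //.
by move=> b Hb; rewrite index_map_in //; apply: mono_inj Hm.
Qed.

Lemma tp_node f b L R : tp x F f (Node b L R) =
  (\prod_(a <- labels L) (Ng x F f a b L R / Dg x f a b L)) * tp x F f L * tp x F f R.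
Proof. by []. Qed.

Theorem main_word n : forall W, perm_eq W (iota 1 n) -> wt_word x F W = tpv (winv W).
Proof.
elim/ltn_ind: n => n IH W HW.
case: W HW => [|w1 W'] HW.
  by rewrite /wt_word /winv /tpv /= /ibt.
have Hw1 : (0 < w1 <= n)%N by rewrite -(memW HW) mem_head.
have Ew1 : w1 = (w1.-1).+1 by lia.
move: HW; rewrite Ew1; set k := w1.-1 => HW.
have Hk := kn HW.
have HsW := sizeW HW.
set V := winv (k.+1 :: W').
set L := take k V.
set R := drop k.+1 V.
have HVu : uniq V := winv_uniq HW.
have HVne : V != [::] by apply/eqP => E; move: (winv_size HW); rewrite -/V E /=; lia.
have HibtV : ibt V = Node 1%N (ibt L) (ibt R).
  by rewrite (ibt_cons HVne) (V_minl HW) (V_index1 HW).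
rewrite /wt_word [size _]/= wt_rec_step.
have Hsz' : size W' = n.-1 by rewrite -HsW.
have Hpos : forall s m, perm_eq s (iota 1 m) -> all (fun v => 0 < v)%N s.
  by move=> s m Hs; apply/allP => v; rewrite (perm_mem Hs) mem_iota; lia.
rewrite -[rev _]/(Sset k W') -[filter _ _]/(afilt k W') -[map _ (filter _ _)]/(bfilt k W').
rewrite !wt_rec_word; try (by rewrite ?(afilt_size HW) ?(bfilt_size HW); lia);
  try exact: Hpos (afilt_perm HW); try exact: Hpos (bfilt_perm HW).
rewrite (IH _ _ _ (afilt_perm HW)) ?(IH _ _ _ (bfilt_perm HW)); try lia.
rewrite (winv_afilt HW) (winv_bfilt HW).
rewrite (@tpv_map (gcnt k W') L) ?(gcnt_mono HW) ?take_uniq //.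
rewrite (@tpv_map (hcnt k W') R) ?(hcnt_mono HW) ?drop_uniq //.
rewrite [in RHS]/tpv HibtV tp_node.
have HVsplit := V_split HW; rewrite -/V -/L -/R in HVsplit.
have HVperm := winv_perm HW; rewrite -/V in HVperm.
have HsV : size V = n := winv_size HW.
congr (_ * _ * _).
- rewrite /Ng /Dg !labels_ibt.
  apply: (@root_eq _ x F hF n (index 1%N V)) => //.
  + by rewrite -HVsplit.
  + by rewrite (V_index1 HW) size_take HsV Hk.
  + exact: S_perm HW.
  + exact: S_sorted.
- rewrite /tpv; apply: tp_congr => b; rewrite labels_ibt => Hb.
  by cbv beta; congr S; symmetry; apply: index_take_in Hb.
- rewrite /tpv -tp_shift //; last exact: good_ibt (drop_uniq _ HVu).
  apply: tp_congr => b; rewrite labels_ibt => Hb.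
  have E := index_drop_in HVu Hb; rewrite -/R size_take HsV in E.
  move: E; case: ifP => H E.
    by cbv beta; rewrite E [k.+1.-1]/= addSn addnC.
  by move: Hb; rewrite /R drop_oversize // HsV; lia.
- exact: (hcnt_mono HW).
- exact: (gcnt_mono HW).
- rewrite (bfilt_size HW) Hsz'; lia.
- rewrite (afilt_size HW) Hsz'; lia.
Qed.

End Main.

End Part5.
Import Part5.

Module Part6.
Import GRing.Theory.

Lemma iota1_enum n : iota 1 n = [seq (val i).+1 | i <- enum 'I_n].
Proof.
by rewrite -[1%N]/(1 + 0)%N iotaDl -val_enum_ord -map_comp.
Qed.

Lemma oneline_perm n (w : 'S_n) : perm_eq (oneline w) (iota 1 n).
Proof.
rewrite /oneline iota1_enum.
have -> : [seq (w i).+1 | i <- enum 'I_n] = [seq (val i).+1 | i <- [seq w i | i <- enum 'I_n]].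
  by elim: (enum _) => //= a s ->.
apply: seq.perm_map; apply: uniq_perm.
- by rewrite map_inj_uniq ?enum_uniq //; exact: perm_inj.
- exact: enum_uniq.
move=> i; rewrite mem_enum; apply/mapP; exists (w^-1 i)%g; first by rewrite mem_enum.
by rewrite permKV.
Qed.

Lemma oneline_inv_winv n (w : 'S_n) : oneline_inv w = winv (oneline w).
Proof.
rewrite /oneline_inv /winv (sizeW (oneline_perm w)) iota1_enum -map_comp /oneline.
apply/eq_map => i /=.
congr S.
have E : (i : nat).+1 = (fun o : 'I_n => (w o).+1) ((w^-1)%g i) by rewrite /= permKV.
rewrite E index_map ?index_enum_ord //.
by move=> a b [] /val_inj /perm_inj.
Qed.

End Part6.
Import Part6.

Unset Implicit Arguments.

Theorem proposition6p3 (K : fieldType) (x : nat -> K) (F : {rmorphism K -> K}) :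
  alg_indep x ->
  (forall i : nat, F (x i) = x i.+1) ->
  forall (n : nat) (w : 'S_n),
    wt_perm x F w = tree_prod x F w (ibt (oneline_inv w)).
Proof.
move=> _ hF n w.
have HW := oneline_perm w.
rewrite /wt_perm (main_word hF HW) /tpv oneline_inv_winv tree_prod_tp.
apply: tp_congr => b; rewrite labels_ibt => Hb.
rewrite (winv_mem HW) in Hb.
rewrite /wval (winv_index HW Hb).
have Hm : nth 0%N (oneline w) b.-1 \in oneline w by rewrite mem_nth // (sizeW HW); lia.
rewrite (memW HW) in Hm.
by rewrite prednK //; case/andP: Hm.
Qed.
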